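(* Let $\phi$ satisfy $\phi'(z)\in[\gamma,1]$ for all $z$ ($\gamma\in(0,1]$), let $C_R=10R^2\gamma^{-2}+10$, and suppose $\|x_i\|^2\ge5\gamma^{-2}C_Rn\max_{k\ne i}|\langle x_i,x_k\rangle|$ for all $i\in[n]$. Then for every $W\in\mathbb{R}^{m\times d}$, $$\|\nabla\hat L(W)\|_F\ge\frac{\gamma R_{\min}}{2\sqrt2R\sqrt n}\hat G(W).$$
   Context: Network $f(x;W)=\sum_{j=1}^ma_j\phi(\langle w_j,x\rangle)$, $a_j\in\{\pm1/\sqrt m\}$. Logistic loss $\ell(z)=\log(1+e^{-z})$, $\hat L(W)=\frac1n\sum_i\ell(y_if(x_i;W))$, $\hat G(W)=\frac1n\sum_i1/(1+e^{y_if(x_i;W)})$. $R_{\max}=\max_i\|x_i\|$, $R_{\min}=\min_i\|x_i\|>0$, $R=R_{\max}/R_{\min}$. *)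

(* Defs.v *)
From mathcomp Require Import all_boot all_order all_algebra.
From mathcomp Require Import all_classical all_reals all_analysis.
Set Implicit Arguments. Unset Strict Implicit. Unset Printing Implicit Defensive.
Import Order.TTheory GRing.Theory Num.Theory.
Import numFieldNormedType.Exports.
Local Open Scope ring_scope.

Section TwoLayer.
Variable R : realType.

Definition dotv (d : nat) (u v : 'rV[R]_d) : R := \sum_(k < d) u 0 k * v 0 k.
Definition vnorm (d : nat) (u : 'rV[R]_d) : R := Num.sqrt (dotv u u).

Definition netf (m d : nat) (a : 'I_m -> R) (phi : R -> R)
  (W : 'M[R]_(m, d)) (x : 'rV[R]_d) : R :=
  \sum_(j < m) a j * phi (dotv (row j W) x).

Definition logloss (z : R) : R := ln (1 + expR (- z)).

Definition Lhat (n m d : nat) (a : 'I_m -> R) (phi : R -> R)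
  (x : 'I_n -> 'rV[R]_d) (y : 'I_n -> R) (W : 'M[R]_(m, d)) : R :=
  n%:R^-1 * \sum_(i < n) logloss (y i * netf a phi W (x i)).

Definition Ghat (n m d : nat) (a : 'I_m -> R) (phi : R -> R)
  (x : 'I_n -> 'rV[R]_d) (y : 'I_n -> R) (W : 'M[R]_(m, d)) : R :=
  n%:R^-1 * \sum_(i < n) (1 + expR (y i * netf a phi W (x i)))^-1.

Definition gradL (n m d : nat) (a : 'I_m -> R) (phi : R -> R)
  (x : 'I_n -> 'rV[R]_d) (y : 'I_n -> R) (W : 'M[R]_(m, d)) : 'M[R]_(m, d) :=
  \matrix_(j < m, k < d)
     derive1 (fun t : R => Lhat a phi x y (W + t *: delta_mx j k)) 0.

Definition frob (m d : nat) (G : 'M[R]_(m, d)) : R :=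
  Num.sqrt (\sum_(j < m) \sum_(k < d) G j k ^+ 2).

(* R_max = max_i ||x_i||, R_min = min_i ||x_i|| (for n >= 1). *)
Definition Rmax (n d : nat) (x : 'I_n -> 'rV[R]_d) : R :=
  \big[Num.max/0]_(i < n) vnorm (x i).
Definition Rmin (n d : nat) (x : 'I_n -> 'rV[R]_d) : R :=
  \big[Num.min/Rmax x]_(i < n) vnorm (x i).

Definition maxcorr (n d : nat) (x : 'I_n -> 'rV[R]_d) (i : 'I_n) : R :=
  \big[Num.max/0]_(k < n | k != i) `|dotv (x i) (x k)|.

End TwoLayer.

(* Main.v *)
Require Import Defs.
From mathcomp Require Import all_boot all_order all_algebra.
From mathcomp Require Import all_classical all_reals all_analysis.
From mathcomp Require Import ring lra.
Import Order.TTheory GRing.Theory Num.Theory.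
Import numFieldNormedType.Exports.
Set Implicit Arguments. Unset Strict Implicit.
Local Open Scope ring_scope.

Section S.
Variable R : realType.

Lemma dotv_shift d m (W : 'M[R]_(m,d)) j k j' (v : 'rV[R]_d) t :
  dotv (row j' (W + t *: delta_mx j k)) v = dotv (row j' W) v + t * ((j' == j)%:R * v 0 k).
Proof.
rewrite /dotv.
transitivity (\sum_(i < d) (row j' W 0 i * v 0 i + t * (((j'==j) && (i==k))%:R * v 0 i))).
  by apply: eq_bigr => i _; rewrite !mxE mulrDl mulrA.
rewrite big_split /=; congr (_ + _).
rewrite -mulr_sumr; congr (_ * _).
rewrite (bigD1 k) //= big1 ?addr0.
  by rewrite eqxx andbT.
by move=> i /negPf ->; rewrite andbF mul0r.
Qed.

Lemma der_phi (phi : R -> R) s c : derivable phi s 1 ->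
  is_derive (0:R) 1 (fun t => phi (s + t * c)) (derive1 phi s * c).
Proof.
move=> dphi.
have hg : is_derive (0:R) 1 (fun t : R => s + t * c) c.
  have -> : (fun t : R => s + t * c) = cst s + c \*: id.
    by apply/funext => t /=; rewrite mulrC.
  apply: is_derive_eq.
  by rewrite add0r [_%:A]mulr1.
have e : s + 0 * c = s by rewrite mul0r addr0.
have := @is_derive1_comp _ phi _ 0 _ _ _ hg.
rewrite e derive1E; apply; exact: derivableP.
Qed.



Lemma is_derive_ext (f g : R -> R) (x0 df : R) :
  (forall t, f t = g t) -> is_derive x0 1 f df -> is_derive x0 1 g df.
Proof. by move=> e; have -> : f = g by apply/funext. Qed.

Lemma der_aphi (phi : R -> R) (al s c : R) : derivable phi s 1 ->
  is_derive (0:R) 1 (fun t => al * phi (s + t * c)) (al * (derive1 phi s * c)).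
Proof.
move=> dphi; apply: (@is_derive_ext (al \*: (fun t => phi (s + t * c)))) => //.
apply: is_deriveZ; exact: der_phi.
Qed.

Lemma der_net m d (a : 'I_m -> R) (phi : R -> R) (W : 'M[R]_(m,d)) j k (v : 'rV[R]_d) :
  (forall z, derivable phi z 1) ->
  is_derive (0:R) 1 (fun t => netf a phi (W + t *: delta_mx j k) v)
    (a j * (derive1 phi (dotv (row j W) v) * v 0 k)).
Proof.
move=> dphi.
apply: (@is_derive_ext (\sum_(j' < m) (fun t => a j' * phi (dotv (row j' W) v + t * ((j'==j)%:R * v 0 k))))).
  by move=> t; rewrite fct_sumE /netf; apply: eq_bigr => j' _; rewrite dotv_shift.
apply: is_derive_eq; first by apply: is_derive_sum => j'; apply: der_aphi.
rewrite (bigD1 j) //= big1 ?addr0; first by rewrite eqxx mul1r.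
by move=> i /negPf ->; rewrite mul0r mulr0 mulr0.
Qed.

Lemma der_log (u : R -> R) (D : R) : is_derive (0:R) 1 u D ->
  is_derive (0:R) 1 (fun t => logloss (u t)) (- (1 + expR (u 0))^-1 * D).
Proof.
move=> du.
have h1 : is_derive (0:R) 1 (fun t => - u t) (- D).
  apply: (@is_derive_ext (- u)) => //; exact: is_deriveN.
have h2 : is_derive (0:R) 1 (fun t => expR (- u t)) (expR (- u 0) * - D).
  apply: (@is_derive_ext (expR \o (fun t => - u t))) => //.
have h3 : is_derive (0:R) 1 (fun t => 1 + expR (- u t)) (expR (- u 0) * - D).
  apply: (@is_derive_ext (cst 1 + (fun t => expR (- u t)))) => //.
  apply: is_derive_eq.
  by rewrite add0r.
have h4 : 0 < 1 + expR (- u 0) by rewrite ltr_wpDr // expR_ge0.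
have h5 := @is_derive1_comp _ (@ln R) (fun t => 1 + expR (- u t)) 0 _ _ (is_derive1_ln h4) h3.
apply: (@is_derive_ext ((@ln R) \o (fun t => 1 + expR (- u t)))); first by [].
apply: is_derive_eq.
have hE := expR_gt0 (u 0).
rewrite expRN.
have h6 : expR (u 0) != 0 by rewrite gt_eqF.
have h7 : 1 + expR (u 0) != 0 by rewrite gt_eqF // addr_gt0.
have h8 : 1 + (expR (u 0))^-1 != 0 by rewrite gt_eqF // addr_gt0 // invr_gt0.
field.
by rewrite h6 h7.
Qed.

Lemma gradL_entry n m d (a : 'I_m -> R) (phi : R -> R) (x : 'I_n -> 'rV[R]_d) (y : 'I_n -> R)
  (W : 'M[R]_(m,d)) j k : (forall z, derivable phi z 1) ->
  gradL a phi x y W j k = n%:R^-1 * \sum_(i<n) (- (1 + expR (y i * netf a phi W (x i)))^-1 *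
     (y i * (a j * (derive1 phi (dotv (row j W) (x i)) * x i 0 k)))).
Proof.
move=> dphi.
rewrite /gradL mxE derive1E.
have H : is_derive (0:R) 1 (fun t => Lhat a phi x y (W + t *: delta_mx j k))
  (n%:R^-1 * \sum_(i<n) (- (1 + expR (y i * netf a phi W (x i)))^-1 *
     (y i * (a j * (derive1 phi (dotv (row j W) (x i)) * x i 0 k))))).
  apply: (@is_derive_ext (n%:R^-1 \*: \sum_(i < n) (fun t => logloss (y i * netf a phi (W + t *: delta_mx j k) (x i))))).
    by move=> t; rewrite /Lhat fct_sumE.
  apply: is_deriveZ; apply: is_derive_sum => i.
  have e : W + 0 *: delta_mx j k = W by rewrite scale0r addr0.
  have := @der_log (fun t => y i * netf a phi (W + t *: delta_mx j k) (x i)) (y i * (a j * (derive1 phi (dotv (row j W) (x i)) * x i 0 k))).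
  rewrite /= e; apply.
  apply: (@is_derive_ext (y i \*: (fun t => netf a phi (W + t *: delta_mx j k) (x i)))) => //.
  apply: is_deriveZ; exact: der_net.
exact: (@derive_val _ _ _ _ _ _ _ H).
Qed.
Lemma dotvC d (u v : 'rV[R]_d) : dotv u v = dotv v u.
Proof. by rewrite /dotv; apply: eq_bigr => k _; rewrite mulrC. Qed.

Lemma pair_bound (ci cl D Mi Ml : R) : `|D| <= Mi -> `|D| <= Ml ->
  - (ci ^+ 2 * Mi / 2) - cl ^+ 2 * Ml / 2 <= ci * cl * D.
Proof.
move=> h1 h2.
have a1 : ci ^+ 2 * `|D| <= ci ^+ 2 * Mi by rewrite ler_wpM2l // sqr_ge0.
have a2 : cl ^+ 2 * `|D| <= cl ^+ 2 * Ml by rewrite ler_wpM2l // sqr_ge0.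
have [hD|hD] := lerP 0 D.
  have e : `|D| = D by rewrite ger0_norm.
  rewrite e in a1 a2.
  have : 0 <= (ci + cl) ^+ 2 * D by rewrite mulr_ge0 // sqr_ge0.
  move=> h; nra.
have e : `|D| = - D by rewrite ltr0_norm.
rewrite e in a1 a2.
have : 0 <= (ci - cl) ^+ 2 * (- D) by rewrite mulr_ge0 // ?sqr_ge0 // oppr_ge0 ltW.
move=> h; nra.
Qed.

Lemma quad n d (x : 'I_n -> 'rV[R]_d) (M : 'I_n -> R) (c : 'I_n -> R) :
  (forall i, 0 <= M i) ->
  (forall i l, l != i -> `|dotv (x i) (x l)| <= M i) ->
  (forall i, 50 * n%:R * M i <= dotv (x i) (x i)) ->
  49/50 * \sum_(i < n) c i ^+ 2 * dotv (x i) (x i) <= \sum_(k < d) (\sum_(i < n) c i * x i 0 k) ^+ 2.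
Proof.
move=> M0 hM hD.
have E : \sum_(k < d) (\sum_(i < n) c i * x i 0 k) ^+ 2 =
   \sum_(i < n) \sum_(l < n) c i * c l * dotv (x i) (x l).
  under eq_bigr do rewrite expr2 mulr_suml.
  under eq_bigr do under eq_bigr do rewrite mulr_sumr.
  rewrite exchange_big; apply: eq_bigr => i _; rewrite exchange_big; apply: eq_bigr => l _.
  by rewrite /dotv mulr_sumr; apply: eq_bigr => k _; ring.
rewrite E.
set A := fun i => c i ^+ 2 * dotv (x i) (x i).
set B := fun i => c i ^+ 2 * M i.
have key : forall i l, (l == i)%:R * A i - B i / 2 - B l / 2 <= c i * c l * dotv (x i) (x l).
  move=> i l; have [->|nli] := eqVneq l i.
    rewrite /A /B mul1r.
    have : 0 <= c i ^+ 2 * M i by rewrite mulr_ge0 // sqr_ge0.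
    move=> h; nra.
  rewrite /B mul0r sub0r; apply: pair_bound; first exact: hM.
  by rewrite dotvC; apply: hM; rewrite eq_sym.
have S1 : \sum_(i < n) \sum_(l < n) ((l == i)%:R * A i - B i / 2 - B l / 2) =
   \sum_(i < n) A i - n%:R * \sum_(i < n) B i.
  transitivity (\sum_(i < n) (A i - n%:R * B i / 2 - (\sum_(l < n) B l) / 2)).
    apply: eq_bigr => i _; rewrite !sumrB; congr (_ - _ - _).
    - rewrite (bigD1 i) //= eqxx mul1r big1 ?addr0 // => l /negPf ->.
      by rewrite mul0r.
    - by rewrite sumr_const card_ord mulr_natl; ring.
    - by rewrite mulr_suml.
  rewrite !sumrB sumr_const card_ord.
  have -> : \sum_(i < n) n%:R * B i / 2 = n%:R * (\sum_(i < n) B i) / 2 by rewrite mulr_sumr mulr_suml.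
  set SA := \sum_(i < n) A i; set SB := \sum_(i < n) B i; rewrite -[(_ / 2) *+ n]mulr_natl. lra.
apply: le_trans (ler_sum _ (fun i _ => ler_sum _ (fun l _ => key i l))).
rewrite S1.
have : n%:R * \sum_(i < n) B i <= 1/50 * \sum_(i < n) A i.
  rewrite mulr_sumr mulr_sumr; apply: ler_sum => i _; rewrite /A /B.
  have := hD i; have := sqr_ge0 (c i) => h1 h2.
  nra.
move=> h; lra.
Qed.
Lemma dotv_ge0 d (v : 'rV[R]_d) : 0 <= dotv v v.
Proof. by rewrite /dotv; apply: sumr_ge0 => k _; rewrite -expr2 sqr_ge0. Qed.

Lemma vnorm_sq d (v : 'rV[R]_d) : vnorm v ^+ 2 = dotv v v.
Proof. by rewrite /vnorm sqr_sqrtr // dotv_ge0. Qed.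

Lemma vnorm_ge0 d (v : 'rV[R]_d) : 0 <= vnorm v.
Proof. exact: sqrtr_ge0. Qed.

Lemma Rmin_le n d (x : 'I_n -> 'rV[R]_d) i : Rmin x <= vnorm (x i).
Proof. by rewrite /Rmin (bigD1 i) //= ge_min lexx. Qed.

Lemma Rmin_le_Rmax n d (x : 'I_n -> 'rV[R]_d) : Rmin x <= Rmax x.
Proof.
rewrite /Rmin; elim/big_ind: _ => //.
  by move=> u v hu hv; rewrite ge_min hu.
by move=> i _; rewrite /Rmax (bigD1 i) //= le_max lexx.
Qed.

Lemma maxcorr_ge0 n d (x : 'I_n -> 'rV[R]_d) i : 0 <= maxcorr x i.
Proof.
rewrite /maxcorr; elim/big_ind: _ => //.
by move=> u v hu hv; rewrite le_max hu.
Qed.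

Lemma maxcorr_le n d (x : 'I_n -> 'rV[R]_d) i l : l != i -> `|dotv (x i) (x l)| <= maxcorr x i.
Proof. by move=> hl; rewrite /maxcorr (bigD1 l) //= le_max lexx. Qed.

Lemma CS n (g : 'I_n -> R) : (\sum_(i < n) g i) ^+ 2 <= n%:R * \sum_(i < n) g i ^+ 2.
Proof.
have E : (\sum_(i < n) g i) ^+ 2 = \sum_(i < n) \sum_(l < n) g i * g l.
  by rewrite expr2 mulr_suml; apply: eq_bigr => i _; rewrite mulr_sumr.
have F : n%:R * \sum_(i < n) g i ^+ 2 = \sum_(i < n) \sum_(l < n) (g i ^+ 2 + g l ^+ 2) / 2.
  transitivity (\sum_(i < n) (n%:R * g i ^+ 2 / 2 + (\sum_(l < n) g l ^+ 2) / 2)).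
    rewrite big_split /= -!mulr_suml -mulr_sumr sumr_const card_ord -mulr_natl.
    set Q := \sum_(i < n) g i ^+ 2; lra.
  apply: eq_bigr => i _; rewrite -mulr_suml big_split /= sumr_const card_ord -mulr_natl.
  set Q := \sum_(l < n) g l ^+ 2; lra.
rewrite E F; apply: ler_sum => i _; apply: ler_sum => l _.
have := sqr_ge0 (g i - g l); nra.
Qed.
End S.
Unset Implicit Arguments. Set Strict Implicit.

Theorem mainTheorem14 (R : realType) (n m d : nat)
  (a : 'I_m -> R) (phi : R -> R) (gamma : R)
  (x : 'I_n -> 'rV[R]_d) (y : 'I_n -> R) :
  (0 < n)%N -> (0 < m)%N ->
  (forall j, a j = (Num.sqrt m%:R)^-1 \/ a j = - (Num.sqrt m%:R)^-1) ->
  (forall i, y i = 1 \/ y i = -1) ->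
  0 < gamma -> gamma <= 1 ->
  (forall z, derivable phi z 1) ->
  (forall z, gamma <= derive1 phi z <= 1) ->
  0 < Rmin x ->
  (let RR := Rmax x / Rmin x in
   let CR := 10 * RR ^+ 2 / gamma ^+ 2 + 10 in
   forall i, vnorm (x i) ^+ 2 >= 5 / gamma ^+ 2 * CR * n%:R * maxcorr x i) ->
  forall W : 'M[R]_(m, d),
    frob (gradL a phi x y W) >=
      gamma * Rmin x /
        (2 * Num.sqrt 2 * (Rmax x / Rmin x) * Num.sqrt n%:R) * Ghat a phi x y W.
Proof.
move=> n0 m0 ha hy g0 g1 dphi hphi Rm0 hx W.
cbv zeta in hx.
have hRle := Rmin_le_Rmax x.
set Rmx := Rmax x in hx hRle *; set Rmn := Rmin x in hx hRle Rm0 *.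
have Rx0 : 0 < Rmx by apply: lt_le_trans hRle.
have RR1 : 1 <= Rmx / Rmn by rewrite ler_pdivlMr // mul1r.
have nR0 : 0 < n%:R :> R by rewrite ltr0n.
have mR0 : 0 < m%:R :> R by rewrite ltr0n.
pose G i := (1 + expR (y i * netf a phi W (x i)))^-1.
have G0 : forall i, 0 < G i by move=> i; rewrite /G invr_gt0 addr_gt0 // expR_gt0.
pose c j i := G i * y i * derive1 phi (dotv (row j W) (x i)).
have entry : forall j k, gradL a phi x y W j k = - (n%:R^-1 * a j) * \sum_(i < n) c j i * x i 0 k.
  move=> j k; rewrite gradL_entry // !mulr_sumr; apply: eq_bigr => i _; rewrite /c /G; ring.
have a2 : forall j, a j ^+ 2 = m%:R^-1.
  move=> j; have e : a j ^+ 2 = (Num.sqrt m%:R)^-1 ^+ 2 by case: (ha j) => ->; rewrite ?sqrrN.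
  by rewrite e exprVn sqr_sqrtr // ltW.
have hD : forall i, 50 * n%:R * maxcorr x i <= dotv (x i) (x i).
  move=> i; rewrite -vnorm_sq; apply: le_trans (hx i); apply: ler_wpM2r; first exact: maxcorr_ge0.
  apply: ler_wpM2r; first exact: ler0n.
  have gi : 1 <= 1 / gamma ^+ 2 by rewrite ler_pdivlMr ?exprn_gt0 // mul1r expr_le1 // ltW.
  have : 0 <= 10 * (Rmx / Rmn) ^+ 2 / gamma ^+ 2.
   by rewrite !mulr_ge0 ?invr_ge0 ?sqr_ge0 ?ler0n // ltW.
  move=> hz; nra.
pose Q := \sum_(i < n) G i ^+ 2.
pose K := gamma ^+ 2 * Rmn ^+ 2 * Q.
have hj : forall j, 49/50 * (m%:R^-1 * (n%:R ^+ 2)^-1) * K <= \sum_(k < d) gradL a phi x y W j k ^+ 2.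
  move=> j.
  have e : \sum_(k < d) gradL a phi x y W j k ^+ 2 =
      m%:R^-1 * (n%:R ^+ 2)^-1 * \sum_(k < d) (\sum_(i < n) c j i * x i 0 k) ^+ 2.
    rewrite mulr_sumr; apply: eq_bigr => k _; rewrite entry exprMn sqrrN exprMn a2 exprVn; ring.
  rewrite e.
  have hw : 0 <= m%:R^-1 * (n%:R ^+ 2)^-1 :> R by rewrite mulr_ge0 // invr_ge0 ?ler0n // exprn_ge0 // ler0n.
  suff hq : 49/50 * K <= \sum_(k < d) (\sum_(i < n) c j i * x i 0 k) ^+ 2.
    apply: le_trans (ler_wpM2l hw hq); rewrite le_eqVlt; apply/orP; left; apply/eqP; ring.
  have Hq := @quad _ _ _ x (maxcorr x) (c j) (maxcorr_ge0 x) (@maxcorr_le _ _ _ x) hD.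
  apply: le_trans Hq.
  apply: ler_wpM2l => //; rewrite /K /Q.
  rewrite mulr_sumr; apply: ler_sum => i _.
  have h1 := hphi (dotv (row j W) (x i)); case/andP: h1 => h1 _.
  have h2 : Rmn ^+ 2 <= dotv (x i) (x i).
    by rewrite -vnorm_sq ler_sqr ?nnegrE ?vnorm_ge0 ?(ltW Rm0) // Rmin_le.
  have h3 : y i ^+ 2 = 1 by case: (hy i) => ->; rewrite ?sqrrN expr1n.
  rewrite /c !exprMn h3 mulr1.
  have := sqr_ge0 (G i); have := ltW Rm0.
  set pp := derive1 phi _ in h1 *; set D := dotv _ _ in h2 *.
  have h4 : gamma ^+ 2 <= pp ^+ 2.
    by rewrite ler_sqr ?nnegrE ?(ltW g0) // (le_trans (ltW g0) h1).
  have D0 : 0 <= D by apply: le_trans h2; exact: sqr_ge0.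
  have k1 : 0 <= (pp ^+ 2 - gamma ^+ 2) * D * G i ^+ 2.
  by rewrite !mulr_ge0 ?subr_ge0 ?sqr_ge0 ?h4 ?h2 ?D0 ?(ltW (G0 i)).
  have k2 : 0 <= gamma ^+ 2 * (D - Rmn ^+ 2) * G i ^+ 2.
  by rewrite !mulr_ge0 ?subr_ge0 ?sqr_ge0 ?h4 ?h2 ?D0 ?(ltW (G0 i)) ?(ltW g0).
  move=> _ _; lra.
pose S := \sum_(j < m) \sum_(k < d) gradL a phi x y W j k ^+ 2.
have Q0 : 0 <= Q by apply: sumr_ge0 => i _; exact: sqr_ge0.
have K0 : 0 <= K by rewrite /K; apply: mulr_ge0 => //; apply: mulr_ge0; exact: sqr_ge0.
have hS : 49/50 * (n%:R ^+ 2)^-1 * K <= S.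
  apply: le_trans (ler_sum _ (fun j _ => hj j)).
  rewrite sumr_const card_ord -mulr_natl.
  rewrite le_eqVlt; apply/orP; left; apply/eqP; field.
  by rewrite !gt_eqF // exprn_gt0.
pose Gs := \sum_(i < n) G i.
have hCS : Gs ^+ 2 <= n%:R * Q by exact: CS.
have eG : Ghat a phi x y W = n%:R^-1 * Gs by [].
rewrite eG.
set RR := Rmx / Rmn in RR1 *.
have RR0 : 0 < RR by apply: lt_le_trans RR1.
have q0 : 0 < Num.sqrt (2 : R) by rewrite sqrtr_gt0.
have r0 : 0 < Num.sqrt (n%:R : R) by rewrite sqrtr_gt0.
have Gs0 : 0 <= Gs by apply: sumr_ge0 => i _; exact: ltW.
set T := gamma * Rmn / (2 * Num.sqrt 2 * RR * Num.sqrt n%:R) * (n%:R^-1 * Gs).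
have T0 : 0 <= T.
  by rewrite /T !mulr_ge0 ?invr_ge0 ?mulr_ge0 ?invr_ge0 ?ler0n ?Gs0 ?(ltW g0) ?(ltW Rm0) ?(ltW Rx0) ?(ltW q0) ?(ltW r0).
have eT : T ^+ 2 = gamma ^+ 2 * Rmn ^+ 2 * Gs ^+ 2 / (8 * RR ^+ 2 * n%:R ^+ 3).
  rewrite /T !exprMn exprVn !exprMn !sqr_sqrtr ?ler0n //.
  field. by rewrite !gt_eqF.
have hT : T ^+ 2 <= S.
  apply: le_trans hS; rewrite eT.
  have w0 : 0 < 8 * RR ^+ 2 * n%:R ^+ 3.
    by rewrite !mulr_gt0 // ?invr_gt0 // exprn_gt0.
  rewrite ler_pdivrMr //.
  have X0 : 0 <= gamma ^+ 2 * Rmn ^+ 2 by rewrite mulr_ge0 // sqr_ge0.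
  apply: le_trans (ler_wpM2l X0 hCS) _.
  have RR2 : 1 <= RR ^+ 2 by rewrite expr_ge1 // ltW.
  have e2 : 49 / 50 * (n%:R ^+ 2)^-1 * K * (8 * RR ^+ 2 * n%:R ^+ 3)
      = (49 / 50 * 8 * RR ^+ 2) * (gamma ^+ 2 * Rmn ^+ 2 * (n%:R * Q)).
    rewrite /K; field; by rewrite gt_eqF.
  rewrite e2 -[X in X <= _]mul1r; apply: ler_wpM2r.
    by rewrite mulr_ge0 // mulr_ge0 // ler0n; rewrite /Q sumr_ge0 // => i _; exact: sqr_ge0.
  lra.
have : Num.sqrt (T ^+ 2) <= Num.sqrt S by rewrite ler_sqrt // (le_trans (sqr_ge0 T) hT).
by rewrite sqrtr_sqr ger0_norm.
Qed.
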